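(* Let $\mathbf{F}$ be a finite field with $q$ elements, $k$ a field in which $q$ is nonzero, and $0\le r\le n$. An element $u\in\mathfrak{a}_{n,r}$ is the unit (two-sided identity element) of $\mathfrak{a}_{n,r}$ if and only if both of the following hold: (a) $[g^{-1}]\,u\,[g]=u$ in $k[\mathfrak{M}_n]$ for every $g\in\mathbf{GL}_n(\mathbf{F})$; (b) $u\cdot[e_{n,r}]=[e_{n,r}]$, where $e_{n,r}=\begin{pmatrix}I_r&\\&0_{n-r}\end{pmatrix}$.
   Context: $\mathfrak{M}_n$ is the monoid of $n\times n$ matrices over $\mathbf{F}$; $k[\mathfrak{M}_n]$ its monoid algebra with basis $[m]$. $\mathfrak{a}_{n,r}$ is the two-sided ideal spanned by $[m]$ with $\operatorname{rank}m\le r$. *)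

(* Defs.v *)
From HB Require Import structures.
From mathcomp Require Import all_boot all_order all_algebra all_field.
Set Implicit Arguments. Unset Strict Implicit. Unset Printing Implicit Defensive.
Import GRing.Theory.
Local Open Scope ring_scope.

(* The monoid algebra k[M_n(F)]: elements are finitely supported (here: all,
   since M_n(F) is finite) functions M_n(F) -> k; [m] is the indicator of m. *)
Definition malg (F : finFieldType) (n : nat) (k : fieldType) :=
  {ffun 'M[F]_n -> k}.

Definition mbasis (F : finFieldType) (n : nat) (k : fieldType) (m : 'M[F]_n)
  : malg F n k := [ffun x => (x == m)%:R].

Definition mmul (F : finFieldType) (n : nat) (k : fieldType) (a b : malg F n k)
  : malg F n k :=
  [ffun m => \sum_(x : 'M[F]_n) \sum_(y : 'M[F]_n | x *m y == m) a x * b y].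

(* membership in the ideal a_{n,r}: spanned by [m] with rank m <= r *)
Definition in_arn (F : finFieldType) (n : nat) (k : fieldType) (r : nat)
  (a : malg F n k) : Prop :=
  forall m : 'M[F]_n, (r < \rank m)%N -> a m = 0.

Definition is_unit_of_arn (F : finFieldType) (n : nat) (k : fieldType) (r : nat)
  (u : malg F n k) : Prop :=
  forall x : malg F n k, in_arn r x -> mmul u x = x /\ mmul x u = x.

Definition e_nr (F : finFieldType) (n r : nat) : 'M[F]_n := pid_mx r.

(* Main.v *)
Require Import Defs.
From mathcomp Require Import all_boot all_order all_algebra all_field.
From mathcomp Require Import ring.
Set Implicit Arguments. Unset Strict Implicit. Unset Printing Implicit Defensive.
Import GRing.Theory.
Local Open Scope ring_scope.

Section S.
Variables (F : finFieldType) (k : fieldType) (n : nat).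
Local Notation M := ('M[F]_n).
Local Notation A := (malg F n k).
Local Notation mb := (@mbasis F n k).

Lemma mmulE (a b : A) m : mmul a b m = \sum_(x : M) \sum_(y : M) (x *m y == m)%:R * (a x * b y).
Proof.
rewrite ffunE; apply: eq_bigr => x _; rewrite big_mkcond; apply: eq_bigr => y _.
by case: eqP; rewrite ?mul1r ?mul0r.
Qed.

Lemma sum_delta (G : M -> k) t : \sum_(z : M) (z == t)%:R * G z = G t.
Proof.
rewrite (bigD1 t) //= eqxx mul1r big1 ?addr0 // => z /negbTE ->; by rewrite mul0r.
Qed.

Lemma mmulA (a b c : A) : mmul (mmul a b) c = mmul a (mmul b c).
Proof.
apply/ffunP => m; rewrite !mmulE.
have -> : \sum_(z : M) \sum_(w : M) (z *m w == m)%:R * (mmul a b z * c w)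
  = \sum_(x : M) \sum_(y : M) \sum_(w : M) (x *m y *m w == m)%:R * (a x * b y * c w).
  rewrite exchange_big /=.
  under eq_bigr => w _ do under eq_bigr => z _ do rewrite mmulE mulr_suml mulr_sumr.
  under eq_bigr => w _ do under eq_bigr => z _ do under eq_bigr => x _ do rewrite mulr_suml mulr_sumr.
  under eq_bigr => w _ do rewrite exchange_big.
  under eq_bigr => w _ do under eq_bigr => x _ do rewrite exchange_big.
  rewrite exchange_big; apply: eq_bigr => x _.
  rewrite exchange_big; apply: eq_bigr => y _.
  apply: eq_bigr => w _.
  rewrite -(sum_delta (fun z => (z *m w == m)%:R * (a x * b y * c w)) (x *m y)).
  apply: eq_bigr => z _; case: (z =P x *m y) => [->|/eqP nz]; first by rewrite eqxx; ring.
  by rewrite [x *m y == z]eq_sym (negbTE nz) !mul0r mulr0.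
have -> : \sum_(x : M) \sum_(v : M) (x *m v == m)%:R * (a x * mmul b c v)
  = \sum_(x : M) \sum_(y : M) \sum_(w : M) (x *m (y *m w) == m)%:R * (a x * b y * c w).
  apply: eq_bigr => x _.
  under eq_bigr => v _ do rewrite mmulE !mulr_sumr.
  under eq_bigr => v _ do under eq_bigr => y _ do rewrite mulr_sumr mulr_sumr.
  rewrite exchange_big; apply: eq_bigr => y _.
  rewrite exchange_big; apply: eq_bigr => w _.
  rewrite -(sum_delta (fun v => (x *m v == m)%:R * (a x * b y * c w)) (y *m w)).
  apply: eq_bigr => v _; case: (v =P y *m w) => [->|/eqP nz]; first by rewrite eqxx; ring.
  by rewrite [y *m w == v]eq_sym (negbTE nz) !mul0r !mulr0.
by under eq_bigr do under eq_bigr do under eq_bigr do rewrite -mulmxA.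
Qed.

Lemma mbasis_mul (x y : M) : mmul (mb x) (mb y) = mb (x *m y).
Proof.
apply/ffunP => m; rewrite mmulE [RHS]ffunE.
transitivity (\sum_(z : M) \sum_(w : M) ((w == y)%:R : k) * ((z == x)%:R * (z *m w == m)%:R)).
  by apply: eq_bigr => z _; apply: eq_bigr => w _; rewrite !ffunE; ring.
under eq_bigr => z _ do rewrite (sum_delta (fun w => ((z == x)%:R : k) * (z *m w == m)%:R)).
by rewrite (sum_delta (fun z => ((z *m y == m)%:R : k))) eq_sym.
Qed.

Lemma mmul1l (x : A) : mmul (mb 1%:M) x = x.
Proof.
apply/ffunP => m; rewrite mmulE.
transitivity (\sum_(z : M) (z == 1%:M)%:R * \sum_(w : M) (z *m w == m)%:R * x w).
  apply: eq_bigr => z _; rewrite mulr_sumr; apply: eq_bigr => w _; rewrite !ffunE; ring.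
rewrite (sum_delta (fun z => \sum_(w : M) (z *m w == m)%:R * x w)).
under eq_bigr do rewrite mul1mx.
by rewrite sum_delta.
Qed.

Lemma mmul1r (x : A) : mmul x (mb 1%:M) = x.
Proof.
apply/ffunP => m; rewrite mmulE exchange_big /=.
transitivity (\sum_(w : M) (w == 1%:M)%:R * \sum_(z : M) (z *m w == m)%:R * x z).
  apply: eq_bigr => w _; rewrite mulr_sumr; apply: eq_bigr => z _; rewrite !ffunE; ring.
rewrite (sum_delta (fun w => \sum_(z : M) (z *m w == m)%:R * x z)).
under eq_bigr do rewrite mulmx1.
by rewrite sum_delta.
Qed.

Lemma arn_mull r (a b : A) : in_arn r b -> in_arn r (mmul a b).
Proof.
move=> hb m hm; rewrite mmulE big1 // => x _; rewrite big1 // => y _.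
case: eqP => [e|_]; last by rewrite mul0r.
rewrite hb ?mulr0 //; rewrite -e in hm; exact: leq_trans hm (mxrankM_maxr _ _).
Qed.

Lemma arn_mulr r (a b : A) : in_arn r a -> in_arn r (mmul a b).
Proof.
move=> ha m hm; rewrite mmulE big1 // => x _; rewrite big1 // => y _.
case: eqP => [e|_]; last by rewrite mul0r.
rewrite ha ?mul0r ?mulr0 //; rewrite -e in hm; exact: leq_trans hm (mxrankM_maxl _ _).
Qed.

Lemma left_gen r (u : A) : (forall m : M, (\rank m <= r)%N -> mmul u (mb m) = mb m) ->
  forall x, in_arn r x -> mmul u x = x.
Proof.
move=> H x hx; apply/ffunP => m0.
have E y : mmul u (mb y) m0 = \sum_(z : M) (z *m y == m0)%:R * u z.
  rewrite mmulE; apply: eq_bigr => z _.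
  transitivity (\sum_(w : M) (w == y)%:R * ((z *m w == m0)%:R * u z)).
    by apply: eq_bigr => w _; rewrite ffunE; ring.
  by rewrite (sum_delta (fun w => (z *m w == m0)%:R * u z)).
transitivity (\sum_(y : M) x y * mmul u (mb y) m0).
  rewrite mmulE exchange_big; apply: eq_bigr => y _; rewrite E mulr_sumr.
  by apply: eq_bigr => z _; ring.
transitivity (\sum_(y : M) (y == m0)%:R * x y); last by rewrite sum_delta.
apply: eq_bigr => y _; case: (leqP (\rank y) r) => h.
  by rewrite H // ffunE eq_sym mulrC.
by rewrite hx // mulr0 mul0r.
Qed.

Definition tr (x : A) : A := [ffun m => x m^T].

Lemma trK x : tr (tr x) = x.
Proof. by apply/ffunP => m; rewrite !ffunE trmxK. Qed.

Lemma tr_arn r x : in_arn r x -> in_arn r (tr x).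
Proof. by move=> h m hm; rewrite ffunE h // mxrank_tr. Qed.

Lemma mmul_tr a b : mmul (tr a) (tr b) = tr (mmul b a).
Proof.
apply/ffunP => m; rewrite [RHS]ffunE !mmulE.
symmetry; rewrite (reindex_inj (@trmx_inj _ n n)) /=.
under eq_bigr => x _ do rewrite (reindex_inj (@trmx_inj _ n n)) /=.
rewrite exchange_big; apply: eq_bigr => y _; apply: eq_bigr => x _.
by rewrite -(trmx_mul y x) (inj_eq (@trmx_inj _ n n)) /tr !ffunE [b _ * _]mulrC.
Qed.

End S.

Theorem lemma4p4 (F : finFieldType) (k : fieldType) (n r : nat)
  (hq : (#|F|%:R : k) != 0) (hrn : (r <= n)%N)
  (u : malg F n k) (hu : in_arn r u) :
  is_unit_of_arn r u <->
  ((forall g : 'M[F]_n, g \in unitmx ->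
      mmul (mmul (mbasis k (invmx g)) u) (mbasis k g) = u) /\
   mmul u (mbasis k (e_nr F n r)) = mbasis k (e_nr F n r)).
Proof.
have eP : in_arn r (mbasis k (e_nr F n r)).
  move=> m hm; rewrite ffunE; case: eqP => // e.
  by rewrite e /e_nr rank_pid_mx // ltnn in hm.
split.
- move=> U; split; last by case: (U _ eP).
  move=> g gU; set h := invmx g; set v := mmul (mmul (mbasis k h) u) (mbasis k g).
  have vA : in_arn r v by apply: arn_mulr; apply: arn_mull.
  have gh : mmul (mbasis k g) (mbasis k h) = mbasis k 1%:M by rewrite mbasis_mul mulmxV.
  have hg : mmul (mbasis k h) (mbasis k g) = mbasis k 1%:M by rewrite mbasis_mul mulVmx.
  have vL : forall x, in_arn r x -> mmul v x = x.
    move=> x hx; set y := mmul (mmul (mbasis k g) x) (mbasis k h).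
    have yA : in_arn r y by apply: arn_mulr; apply: arn_mull.
    have xE : x = mmul (mmul (mbasis k h) y) (mbasis k g).
      by rewrite /y !mmulA hg mmul1r -mmulA hg mmul1l.
    transitivity (mmul (mmul (mbasis k h) (mmul u y)) (mbasis k g));
      last by rewrite (U y yA).1 -xE.
    rewrite [in LHS]xE /v !mmulA.
    by rewrite -(mmulA (mbasis k g)) gh mmul1l.
  rewrite -[in RHS](vL u hu); by case: (U v vA) => _ ->.
- case=> Hg He.
  have Lb : forall m : 'M[F]_n, (\rank m <= r)%N -> mmul u (mbasis k m) = mbasis k m.
    move=> m hm; set G := col_ebase m; set H := row_ebase m; set s := \rank m.
    have mE : m = G *m ((e_nr F n r *m pid_mx s) *m H).
      by rewrite /e_nr mul_pid_mx (minn_idPr hm) (minn_idPr (rank_leq_row m)) mulmxA mulmx_ebase.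
    have GU : G \in unitmx by exact: col_ebase_unit.
    have uG : mmul u (mbasis k G) = mmul (mbasis k G) u.
      by rewrite -{2}(Hg G GU) -!mmulA mbasis_mul mulmxV // mmul1l.
    rewrite mE -!mbasis_mul -mmulA uG mmulA.
    by rewrite -(mmulA u) -(mmulA u) He.
  have Lu := left_gen Lb.
  have tU : forall x, in_arn r x -> mmul x (tr u) = x.
    by move=> x hx; rewrite -[x in LHS]trK mmul_tr Lu ?trK //; exact: tr_arn.
  have ut : tr u = u by rewrite -[LHS](Lu _ (tr_arn hu)); exact: tU.
  move=> x hx; split; first exact: Lu.
  rewrite -ut; exact: tU.
Qed.
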